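(* Let ${\tt G}$ be a digraph with a fixed total order on its vertices, $R$ a commutative unital ring, $A$ a unital associative $R$-algebra and $M$ an $(A,A)$-bimodule. The graded $R$-module $C^n_\mu({\tt G};A,M)=\bigoplus_{{\tt H}\in P({\tt G}),\ \#E({\tt H})=n}\mathcal F_{A,M}({\tt H})$ with the map $d=\sum_{{\tt H}\prec{\tt H}'}(-1)^{\sigma_{\rm e}({\tt H},{\tt H}')}\mathcal F_{A,M}({\tt H}\prec{\tt H}')$ is a cochain complex.
   Context: A digraph ${\tt G}=(V,E)$ has finite $V$ and $E\subseteq(V\times V)\setminus\{(v,v)\}$; $s(e),t(e)$ are source and target of $e$. A multipath is a spanning subgraph (all vertices, subset of edges) each of whose components (of the underlying undirected graph) is an isolated vertex or a simple directed path (edges $e_1,\dots,e_k$ with $t(e_i)=s(e_{i+1})$, no repeated vertex, not a cycle). $P({\tt G})$ is the set of multipaths ordered by inclusion of edge sets; ${\tt H}\prec{\tt H}\cup e$ denotes adding one edge. For a multipath ${\tt H}$ with components $c_0<\dots<c_k$ ordered by minimal vertex, let $s(e,{\tt H}),t(e,{\tt H})$ be the indices of the components containing $s(e),t(e)$. $\mathcal F_{A,M}({\tt H})=M\otimes_R A^{\otimes_R k}$ (factor $M$ for $c_0$, one $A$ for each other component); for ${\tt H}\prec{\tt H}\cup e$ with $s=s(e,{\tt H})$, $t=t(e,{\tt H})$, the merged component sits at position $\min(s,t)$ and $\mathcal F_{A,M}({\tt H}\prec{\tt H}\cup e)$ replaces the factors $a_s,a_t$ by $a_s\cdot a_t$ at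 that position, other factors unchanged. $\sigma_{\rm e}({\tt H},{\tt H}\cup e)=t+1$ if $t>s$, and $=s$ if $s>t$, mod 2. *)

(* Defs.v *)
From HB Require Import structures.
From mathcomp Require Import all_boot all_order all_algebra.
From Stdlib Require Import ClassicalEpsilon.
Set Implicit Arguments. Unset Strict Implicit. Unset Printing Implicit Defensive.
Import GRing.Theory.
Local Open Scope ring_scope.

(* Vertices are 'I_N, totally ordered by the natural order of ordinals.
   Edges are ordered pairs (source, target). *)
Section Graph.
Variable N : nat.
Local Notation V := 'I_N.
Local Notation edge := (V * V)%type.

Definition is_digraph (E : {set edge}) : Prop := forall e, e \in E -> e.1 != e.2.

Definition drel (H : {set edge}) : rel V := fun u v => (u, v) \in H.
Definition urel (H : {set edge}) : rel V := fun u v => ((u, v) \in H) || ((v, u) \in H).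

(* H is a multipath of G = (V,E): a spanning subgraph (H \subset E) whose
   components are isolated vertices or simple directed paths, i.e.
   in/out-degrees at most 1 and no directed cycle. *)
Definition multipath (E H : {set edge}) : bool :=
  [&& H \subset E,
      [forall v : V, #|[set u : V | (v, u) \in H]| <= 1]%N,
      [forall v : V, #|[set u : V | (u, v) \in H]| <= 1]%N &
      [forall u : V, forall v : V, ((u, v) \in H) ==> ~~ connect (drel H) v u]].

Definition comp_min (H : {set edge}) (w : V) : bool :=
  [forall u : V, connect (urel H) w u ==> (w <= u)%N].

Definition ncomp (H : {set edge}) : nat := #|[set w : V | comp_min H w]|.
Definition kdeg (H : {set edge}) : nat := (ncomp H).-1.

(* index (0-based, components ordered by minimal vertex) of the component
   containing v *)
Definition cidx (H : {set edge}) (v : V) : nat :=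
  #|[set w : V | comp_min H w & [forall u : V, connect (urel H) v u ==> (w < u)%N]]|.
End Graph.

Section Algebra.
Variables (R : comPzRingType) (A : algType R) (M : lmodType R).

Record bimodule := Bimodule {
  lact : A -> M -> M;
  ract : M -> A -> M;
  lact1 : forall m, lact 1 m = m;
  lactM : forall a b m, lact (a * b) m = lact a (lact b m);
  ract1 : forall m, ract m 1 = m;
  ractM : forall a b m, ract m (a * b) = ract (ract m a) b;
  lract : forall a b m, lact a (ract m b) = ract (lact a m) b;
  lact_linl : forall m, linear (fun a : A => lact a m);
  lact_linr : forall a, linear (lact a);
  ract_linl : forall m, linear (ract m);
  ract_linr : forall a, linear (fun m : M => ract m a)
}.

Definition multilinear (k : nat) (W : lmodType R) (f : M -> ('I_k -> A) -> W) : Prop :=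
  (forall a, linear (fun m : M => f m a)) /\
  (forall m a (i : 'I_k), linear (fun x : A => f m (fun j => if j == i then x else a j))).

(* A choice of tensor products  T k = M (x)_R A^{(x)_R k}, k >= 0, given by
   their universal property w.r.t. R-multilinear maps. *)
Unset Implicit Arguments.
Record tensor_power := TensorPower {
  tp_T : nat -> lmodType R;
  tp_i : forall k, M -> ('I_k -> A) -> tp_T k;
  tp_multi : forall k, multilinear (tp_i k);
  tp_univ : forall k (W : lmodType R) (f : M -> ('I_k -> A) -> W),
      multilinear f ->
      exists! g : tp_T k -> W, linear g /\ (forall m a, g (tp_i k m a) = f m a)
}.
Set Implicit Arguments.
Arguments tp_i : clear implicits.

Definition tlift (TP : tensor_power) (k : nat) (W : lmodType R)
    (f : M -> ('I_k -> A) -> W) : tp_T TP k -> W :=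
  epsilon (inhabits (fun _ => 0))
    (fun g : tp_T TP k -> W => linear g /\ (forall m a, g (tp_i TP k m a) = f m a)).

(* factor of a tensor by (0-based) A-index, 0 outside range *)
Definition getA (k : nat) (a : 'I_k -> A) (i : nat) : A :=
  if @insub nat (fun x => (x < k)%N) 'I_k i is Some j then a j else 0.

(* Merging the factors at component positions s and t (position 0 is the M
   factor, position p >= 1 is the A-factor a_(p-1)): the product
   a_s * a_t goes to position min(s,t), position max(s,t) is removed. *)
Definition merge_m (B : bimodule) (k : nat) (s t : nat) (m : M) (a : 'I_k -> A) : M :=
  if s == 0%N then ract B m (getA a t.-1)
  else if t == 0%N then lact B (getA a s.-1) m
  else m.

Definition merge_a (k k' : nat) (s t : nat) (a : 'I_k -> A) : 'I_k' -> A :=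
  fun j =>
    let q := j.+1 in
    if q == minn s t then getA a s.-1 * getA a t.-1
    else getA a (if (q < maxn s t)%N then q else q.+1).-1.

Variable N : nat.
Local Notation edge := ('I_N * 'I_N)%type.

(* F_{A,M}(H < H') for H' = H u {e} *)
Definition Fmap (B : bimodule) (TP : tensor_power) (H H' : {set edge}) (e : edge) :
    tp_T TP (kdeg H) -> tp_T TP (kdeg H') :=
  let s := cidx H e.1 in
  let t := cidx H e.2 in
  @tlift TP (kdeg H) (tp_T TP (kdeg H'))
    (fun m a => tp_i TP (kdeg H') (merge_m B s t m a) (@merge_a (kdeg H) (kdeg H') s t a)).

Definition esign (s t : nat) : R := (-1) ^+ (if (s < t)%N then t.+1 else s).

(* cochains: one component F(H) for each edge set H (only multipaths of the
   relevant degree are used) *)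
Definition cochain (TP : tensor_power) := forall H : {set edge}, tp_T TP (kdeg H).

Definition dmu (E : {set edge}) (B : bimodule) (TP : tensor_power) (n : nat)
    (x : cochain TP) : cochain TP :=
  fun H' =>
    if multipath E H' && (#|H'| == n.+1) then
      \sum_(e in H') esign (cidx (H' :\ e) e.1) (cidx (H' :\ e) e.2)
                       *: @Fmap B TP (H' :\ e) H' e (x (H' :\ e))
    else 0.
End Algebra.
Arguments tensor_power {R} A M.
Arguments tp_T {R A M} t k.
Arguments tp_i {R A M} t k _ _.
Arguments bimodule {R} A M.
Arguments cochain {R A M} N TP.
Arguments dmu {R A M N} E B TP n x _.

(* Main.v *)
Require Import Defs.
From HB Require Import structures.
From mathcomp Require Import all_boot all_order all_algebra.
From mathcomp Require Import zify.
From Stdlib Require Import ClassicalEpsilon FunctionalExtensionality.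
Set Implicit Arguments. Unset Strict Implicit. Unset Printing Implicit Defensive.
Import GRing.Theory.
Local Open Scope ring_scope.

Ltac simp_if := repeat match goal with
 | |- context [if ?c then _ else _] =>
   lazymatch c with context [if _ then _ else _] => fail | _ => idtac end;
   first [ have -> : c = true by lia | have -> : c = false by lia | let E := fresh "E" in case E : c ]
 end.

Definition phi (s t c : nat) : nat :=
  if (c == s) || (c == t) then minn s t else if (maxn s t < c)%N then c.-1 else c.

Section G.
Variable N : nat.
Local Notation V := 'I_N.
Local Notation edge := (V * V)%type.
Local Notation C H := (connect (urel H)).

Lemma urel_sym (H : {set edge}) : symmetric (urel H).
Proof. by move=> u v; rewrite /urel orbC. Qed.

Lemma C_sym (H : {set edge}) u v : C H u v = C H v u.
Proof. exact: (sym_connect_sym (urel_sym H)). Qed.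

Definition rmin (H : {set edge}) (v : V) : V := [arg min_(u < v | C H v u) (u : nat)].

Lemma rminP (H : {set edge}) v : C H v (rmin H v) /\ forall u, C H v u -> (rmin H v <= u)%N.
Proof.
rewrite /rmin; case: arg_minnP; first exact: connect0.
by move=> i Hi Hm; split.
Qed.

Lemma rmin_C (H : {set edge}) v : C H v (rmin H v). Proof. by case: (rminP H v). Qed.
Lemma rmin_le (H : {set edge}) v u : C H v u -> (rmin H v <= u)%N. Proof. by case: (rminP H v) => _; apply. Qed.

Lemma rmin_char (H : {set edge}) v w : C H v w -> (forall u, C H v u -> (w <= u)%N) -> rmin H v = w.
Proof.
move=> Hw Hm; apply: val_inj; apply/eqP; rewrite eqn_leq rmin_le //=.
exact: Hm (rmin_C H v).
Qed.

Lemma rmin_eq (H : {set edge}) u v : C H u v -> rmin H u = rmin H v.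
Proof.
move=> Huv; apply: rmin_char.
  exact: connect_trans Huv (rmin_C H v).
move=> w Huw; apply: rmin_le; apply: connect_trans Huw; by rewrite C_sym.
Qed.

Lemma comp_minE (H : {set edge}) w : comp_min H w = (rmin H w == w).
Proof.
apply/forallP/eqP => [Hm|Hw u].
  apply: rmin_char; first exact: connect0.
  by move=> u Hu; move: (Hm u); rewrite Hu.
apply/implyP => Hu; rewrite -Hw; exact: rmin_le.
Qed.

Definition cnt (H : {set edge}) (r : nat) := #|[set w : V | comp_min H w & (w < r)%N]|.

Lemma cidxE (H : {set edge}) v : cidx H v = cnt H (rmin H v).
Proof.
apply: eq_card => w; rewrite !inE; congr andb; apply/forallP/idP => [Hm|Hw u].
  by move: (Hm (rmin H v)); rewrite rmin_C.
by apply/implyP => Hu; apply: leq_trans Hw (rmin_le Hu).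
Qed.

Lemma rmin_root (H : {set edge}) v : comp_min H (rmin H v).
Proof. by rewrite comp_minE -(rmin_eq (rmin_C H v)). Qed.

Lemma cnt_mono (H : {set edge}) r1 r2 : (r1 <= r2)%N -> (cnt H r1 <= cnt H r2)%N.
Proof.
move=> h; apply: subset_leq_card; apply/subsetP => w; rewrite !inE => /andP[-> /= h1].
exact: leq_trans h1 h.
Qed.

Lemma cnt_lt (H : {set edge}) (r1 : V) r2 : comp_min H r1 -> (r1 < r2)%N -> (cnt H r1 < cnt H r2)%N.
Proof.
move=> hr h; apply: proper_card; apply/properP; split.
  apply/subsetP => w; rewrite !inE => /andP[-> /= h1]; exact: ltn_trans h1 h.
by exists r1; rewrite !inE ?hr ?h // ltnn andbF.
Qed.

Lemma cidx_lt (H : {set edge}) (u v : V) : (cidx H u < cidx H v)%N = (rmin H u < rmin H v)%N.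
Proof.
rewrite !cidxE; apply/idP/idP => h; last exact: cnt_lt (rmin_root _ _) h.
rewrite ltnNge; apply/negP => h2; move: (cnt_mono H h2); by rewrite leqNgt h.
Qed.

Lemma rmin_inj (H : {set edge}) u v : rmin H u = rmin H v -> C H u v.
Proof.
move=> h; apply: connect_trans (rmin_C H u) _; rewrite h C_sym; exact: rmin_C.
Qed.

Lemma cidx_eq (H : {set edge}) (u v : V) : (cidx H u == cidx H v) = C H u v.
Proof.
apply/idP/idP => [h|h]; last by rewrite !cidxE (rmin_eq h).
apply: rmin_inj; apply: val_inj; apply/eqP; rewrite eqn_leq.
by apply/andP; split; rewrite leqNgt -cidx_lt (eqP h) ltnn.
Qed.

Lemma cidx_ncomp (H : {set edge}) v : (cidx H v < ncomp H)%N.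
Proof.
rewrite cidxE; apply: proper_card; apply/properP; split.
  by apply/subsetP => w; rewrite !inE => /andP[-> _].
by exists (rmin H v); rewrite !inE ?rmin_root // ltnn.
Qed.

Lemma cntS (H : {set edge}) r (Hr : (r < N)%N) :
  cnt H r.+1 = (comp_min H (@Ordinal N r Hr) + cnt H r)%N.
Proof.
rewrite /cnt (cardsD1 (@Ordinal N r Hr)) !inE ltnSn andbT; congr (_ + _)%N.
apply: eq_card => w; rewrite !inE ltnS leq_eqVlt -val_eqE /=.
by case: (comp_min H w); rewrite ?andbF //=; case: (ltngtP w r).
Qed.

Lemma cnt_N (H : {set edge}) : cnt H N = ncomp H.
Proof. by apply: eq_card => w; rewrite !inE ltn_ord andbT. Qed.

Lemma cidx_surj (H : {set edge}) j : (j < ncomp H)%N -> exists v, cidx H v = j.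
Proof.
rewrite -cnt_N.
suff: forall r, (r <= N)%N -> (j < cnt H r)%N -> exists v, cidx H v = j by apply.
elim=> [|r IH] hr hj.
  suff : cnt H 0 = 0%N by move=> h0; rewrite h0 in hj.
  by apply/eqP; rewrite cards_eq0; apply/eqP/setP => w; rewrite !inE ltn0 andbF.
rewrite (cntS H hr) in hj.
case: (ltnP j (cnt H r)) => h; first exact: IH (ltnW hr) h.
have hroot : comp_min H (@Ordinal N r hr) by move: hj; case: (comp_min _ _) => //=; rewrite ltnNge h.
exists (@Ordinal N r hr); rewrite cidxE.
have -> : rmin H (@Ordinal N r hr) = Ordinal hr by apply/eqP; rewrite -comp_minE.
move: hj; rewrite hroot /= add1n ltnS => h2; apply/eqP; rewrite eqn_leq h2 h //.
Qed.

Lemma urel1 (H0 : {set edge}) (x y u v : V) :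
  urel ((x, y) |: H0) u v = [|| urel H0 u v, (u == x) && (v == y) | (u == y) && (v == x)].
Proof.
rewrite /urel !inE !xpair_eqE.
by case: ((u, v) \in H0); case: ((v, u) \in H0); case: (u == x); case: (v == y); case: (u == y); case: (v == x).
Qed.

Lemma C_sub (H0 H1 : {set edge}) u v : H0 \subset H1 -> C H0 u v -> C H1 u v.
Proof.
move=> /subsetP hs; apply: connect_sub => a b; rewrite /urel => /orP[h|h]; apply: connect1;
by rewrite /urel (hs _ h) ?orbT.
Qed.

Lemma S1 (H0 : {set edge}) (x y u v : V) :
  C ((x, y) |: H0) u v = [|| C H0 u v, C H0 u x && C H0 y v | C H0 u y && C H0 x v].
Proof.
have sub : H0 \subset (x, y) |: H0 by apply/subsetP => z hz; rewrite !inE hz orbT.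
have exy : C ((x, y) |: H0) x y by apply: connect1; rewrite /urel !inE eqxx.
have eyx : C ((x, y) |: H0) y x by rewrite C_sym.
apply/idP/idP.
  move/connectP => [p Hp ->]; elim: p u Hp => [|w p IH] u /=; first by rewrite connect0.
  move/andP => [Huw Hp]; move: (IH w Hp).
  move: Huw; rewrite urel1 => /orP[Huw|/orP[/andP[/eqP-> /eqP->]|/andP[/eqP-> /eqP->]]].
    have cuw : C H0 u w by apply: connect1.
    move=> /orP[h|/orP[/andP[h1 h2]|/andP[h1 h2]]].
    - by rewrite (connect_trans cuw h).
    - by rewrite (connect_trans cuw h1) h2 orbT.
    - by rewrite (connect_trans cuw h1) h2 !orbT.
  - move=> /orP[h|/orP[/andP[h1 h2]|/andP[h1 h2]]].
    - by rewrite connect0 h orbT.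
    - by rewrite connect0 h2 orbT.
    - by rewrite h2.
  - move=> /orP[h|/orP[/andP[h1 h2]|/andP[h1 h2]]].
    - by rewrite connect0 h !orbT.
    - by rewrite h2.
    - by rewrite connect0 h2 !orbT.
move=> /orP[h|/orP[/andP[h1 h2]|/andP[h1 h2]]].
- exact: C_sub h.
- apply: connect_trans (C_sub sub h1) _; exact: connect_trans exy (C_sub sub h2).
- apply: connect_trans (C_sub sub h1) _; exact: connect_trans eyx (C_sub sub h2).
Qed.

Lemma cnt_root_lt (H : {set edge}) (a b : V) : comp_min H a -> comp_min H b ->
  (cnt H a < cnt H b)%N = (a < b)%N.
Proof.
move=> ha hb; apply/idP/idP => h; last exact: cnt_lt.
rewrite ltnNge; apply/negP => h2; move: (cnt_mono H h2); by rewrite leqNgt h.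
Qed.

Section Step.
Variables (H0 : {set edge}) (x y : V).
Hypothesis hxy : ~~ C H0 x y.
Local Notation H1 := ((x, y) |: H0).
Local Notation r1 := (rmin H0 x).
Local Notation r2 := (rmin H0 y).
Local Notation lo := (if (r1 < r2)%N then r1 else r2).
Local Notation hi := (if (r1 < r2)%N then r2 else r1).

Lemma r12 : r1 != r2.
Proof. by apply/negP => /eqP h; move: hxy; rewrite (rmin_inj h). Qed.

Lemma S2 v : rmin H1 v = if C H0 v x || C H0 v y then lo else rmin H0 v.
Proof.
have cx : C H0 x r1 := rmin_C H0 x.
have cy : C H0 y r2 := rmin_C H0 y.
case: ifP => hv; apply: rmin_char.
- case: ifP => _; rewrite S1.
  + case/orP: hv => hv; first by rewrite (connect_trans hv cx).
    by rewrite hv (connect_trans (connect0 _ _) cx) !orbT.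
  + case/orP: hv => hv; first by rewrite hv cy orbT.
    by rewrite (connect_trans hv cy).
- move=> u; rewrite S1 => /orP[h|/orP[/andP[h1 h2]|/andP[h1 h2]]].
  + have lo1 : (lo <= r1)%N by case: ifP => // /negbT; rewrite -leqNgt.
    have lo2 : (lo <= r2)%N by case: ifP => // /ltnW.
    case/orP: hv => hv.
      apply: leq_trans lo1 (rmin_le _); rewrite C_sym in hv; exact: connect_trans hv h.
    apply: leq_trans lo2 (rmin_le _); rewrite C_sym in hv; exact: connect_trans hv h.
  + have lo2 : (lo <= r2)%N by case: ifP => // /ltnW.
    exact: leq_trans lo2 (rmin_le h2).
  + have lo1 : (lo <= r1)%N by case: ifP => // /negbT; rewrite -leqNgt.
    exact: leq_trans lo1 (rmin_le h2).
- by rewrite S1 rmin_C.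
- move=> u; rewrite S1 => /orP[h|/orP[/andP[h1 h2]|/andP[h1 h2]]].
  + exact: rmin_le.
  + by rewrite h1 in hv.
  + by rewrite h1 orbT in hv.
Qed.

Lemma S3 : [set w | comp_min H1 w] = [set w | comp_min H0 w] :\ hi.
Proof.
have cx : C H0 x r1 := rmin_C H0 x.
have cy : C H0 y r2 := rmin_C H0 y.
have nr := r12.
have fin : forall w (a : V), false = (w != a) && (a == w).
  by move=> w a; apply/esym/negbTE/andP => [[h1 /eqP h2]]; rewrite h2 eqxx in h1.
apply/setP => w; rewrite !inE !comp_minE S2.
case: ifP => hv.
- have [hw|hw] : rmin H0 w = r1 \/ rmin H0 w = r2.
    by case/orP: hv => hv; [left|right]; apply: rmin_eq.
  + rewrite hw; case: ifP => hlt.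
    * case: (eqVneq r1 w) => [<-|] //=; last by rewrite andbF.
      by rewrite andbT; apply/esym; exact: nr.
    * case: (eqVneq r2 w) => [e2|_]; last exact: fin.
      exfalso; have h : C H0 w x by apply: rmin_inj; rewrite hw.
      have : C H0 x y.
        apply: connect_trans (_ : C H0 x w) _; first by rewrite C_sym.
        by rewrite -e2 C_sym.
      by rewrite (negbTE hxy).
  + rewrite hw; case: ifP => hlt.
    * case: (eqVneq r1 w) => [e1|_]; last exact: fin.
      exfalso; have h : C H0 w y by apply: rmin_inj; rewrite hw.
      have : C H0 x y.
        apply: connect_trans (_ : C H0 x w) _; first by rewrite -e1.
        exact: h.
      by rewrite (negbTE hxy).
    * case: (eqVneq r2 w) => [<-|] //=; last by rewrite andbF.
      by rewrite andbT eq_sym; apply/esym; exact: nr.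
- case: (eqVneq (rmin H0 w) w) => [hw|]; last by rewrite andbF.
  rewrite andbT; case: ifP => _; apply/esym/negP => /eqP he; move: hv.
  + have h : C H0 y w by rewrite he; exact: rmin_C.
    by rewrite [C H0 w y]C_sym h orbT.
  + have h : C H0 x w by rewrite he; exact: rmin_C.
    by rewrite [C H0 w x]C_sym h.
Qed.

Lemma hi_root : comp_min H0 hi.
Proof. by case: ifP => _; exact: rmin_root. Qed.

Lemma root1 w : comp_min H1 w = (w != hi) && comp_min H0 w.
Proof. by have := congr1 (fun S : {set V} => w \in S) S3; rewrite /= !inE. Qed.

Lemma cnt1 r : cnt H1 r = (cnt H0 r - (hi < r)%N)%N.
Proof.
rewrite /cnt (cardsD1 hi [set w | comp_min H0 w & (w < r)%N]) !inE hi_root /=.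
rewrite addKn; apply: eq_card => w; rewrite !inE root1; by case: (w != hi).
Qed.

Lemma cnt_lo : cnt H0 lo = minn (cnt H0 r1) (cnt H0 r2).
Proof.
case: ifP => h.
  by apply/esym/minn_idPl; apply: cnt_mono; apply: ltnW.
by apply/esym/minn_idPr; apply: cnt_mono; rewrite leqNgt h.
Qed.

Lemma cnt_hi : cnt H0 hi = maxn (cnt H0 r1) (cnt H0 r2).
Proof.
case: ifP => h.
  by apply/esym/maxn_idPr; apply: cnt_mono; apply: ltnW.
by apply/esym/maxn_idPl; apply: cnt_mono; rewrite leqNgt h.
Qed.

Lemma lo_hi : (lo <= hi)%N.
Proof. by case: ifP => h; [apply: ltnW | rewrite leqNgt h]. Qed.

Lemma S4 v : cidx H1 v = phi (cidx H0 x) (cidx H0 y) (cidx H0 v).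
Proof.
rewrite /phi !cidx_eq [cidx H1 v]cidxE S2 !(cidxE H0) -cnt_hi.
case: ifP => hv.
  rewrite cnt1 -cnt_lo; have -> : (hi < lo)%N = false by rewrite ltnNge lo_hi.
  by rewrite subn0.
rewrite cnt1 cnt_root_lt ?hi_root ?rmin_root //.
by case: (hi < rmin H0 v)%N; rewrite ?subn1 ?subn0.
Qed.

Lemma ncomp_pos (H : {set edge}) (v : V) : (0 < ncomp H)%N.
Proof. by apply: leq_ltn_trans (cidx_ncomp H v). Qed.

Lemma S5 : ncomp H0 = (ncomp H1).+1.
Proof.
rewrite /ncomp (cardsD1 hi) !inE hi_root add1n; congr _.+1.
by apply: eq_card => w; rewrite !inE root1.
Qed.
End Step.

Local Notation D H := (connect (drel H)).

Lemma D_first (H : {set edge}) u w : D H u w -> u != w -> exists z, (u, z) \in H /\ D H z w.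
Proof.
move/connectP => [[|z p] /= Hp Hl]; first by rewrite Hl eqxx.
move=> _; case/andP: Hp => h1 h2; exists z; split => //; apply/connectP; by exists p.
Qed.

Lemma D_last (H : {set edge}) u w : D H u w -> u != w -> exists z, D H u z /\ (z, w) \in H.
Proof.
move/connectP => [p Hp Hl]; case/lastP: p Hp Hl => [|q z] /=; first by move=> _ ->; rewrite eqxx.
rewrite rcons_path last_rcons => /andP[h1 h2] -> _; exists (last u q); split => //.
apply/connectP; by exists q.
Qed.

Lemma D_sub (H0 H1 : {set edge}) u v : H0 \subset H1 -> D H0 u v -> D H1 u v.
Proof.
move=> /subsetP hs; apply: connect_sub => a b h; apply: connect1; exact: hs.
Qed.

Section Deg.
Variable H : {set edge}.
Hypothesis outH : forall v a b, (v, a) \in H -> (v, b) \in H -> a = b.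
Hypothesis inH : forall v a b, (a, v) \in H -> (b, v) \in H -> a = b.

Lemma DL u v : C H u v -> D H u v || D H v u.
Proof.
move/connectP => [p Hp ->]; elim: p u Hp => [|w p IH] u /=; first by rewrite connect0.
case/andP => huw /IH {IH}; set v0 := last w p => IH.
case/orP: huw => [hd|hd].
- case/orP: IH => h.
    by rewrite (connect_trans (connect1 (hd : drel H u w)) h).
  case: (eqVneq v0 w) => [ev|nv].
    by rewrite ev (connect1 (hd : drel H u w)).
  case: (D_last h nv) => z [h1 h2]; rewrite (inH h2 hd) in h1; by rewrite h1 orbT.
- case/orP: IH => h; last first.
    by rewrite (connect_trans h (connect1 (hd : drel H w u))) orbT.
  case: (eqVneq w v0) => [ev|nv].
    by rewrite -ev (connect1 (hd : drel H w u)) orbT.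
  case: (D_first h nv) => z [h1 h2]; rewrite (outH h1 hd) in h2; by rewrite h2.
Qed.

Lemma D_out0 u w : (forall z, (u, z) \notin H) -> D H u w -> u = w.
Proof.
move=> h0 hd; apply/eqP/negPn/negP => nv; case: (D_first hd nv) => z [h1 _].
by move: (h0 z); rewrite h1.
Qed.

Lemma D_in0 u w : (forall z, (z, w) \notin H) -> D H u w -> u = w.
Proof.
move=> h0 hd; apply/eqP/negPn/negP => nv; case: (D_last hd nv) => z [_ h1].
by move: (h0 z); rewrite h1.
Qed.
End Deg.

Section MP.
Variables (E Hpp : {set edge}).
Hypothesis mp : multipath E Hpp.

Lemma mp_out v a b : (v, a) \in Hpp -> (v, b) \in Hpp -> a = b.
Proof.
case/and4P: mp => _ /forallP /(_ v) /card_le1_eqP h _ _ ha hb.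
by apply: h; rewrite inE.
Qed.

Lemma mp_in v a b : (a, v) \in Hpp -> (b, v) \in Hpp -> a = b.
Proof.
case/and4P: mp => _ _ /forallP /(_ v) /card_le1_eqP h _ ha hb.
by apply: h; rewrite inE.
Qed.

Lemma mp_acyc u v : (u, v) \in Hpp -> ~~ D Hpp v u.
Proof.
case/and4P: mp => _ _ _ /forallP /(_ u) /forallP /(_ v) /implyP h; exact: h.
Qed.

Variable H : {set edge}.
Hypothesis sub : H \subset Hpp.

Lemma sub_out v a b : (v, a) \in H -> (v, b) \in H -> a = b.
Proof. by move=> ha hb; apply: (mp_out ((subsetP sub) _ ha) ((subsetP sub) _ hb)). Qed.
Lemma sub_in v a b : (a, v) \in H -> (b, v) \in H -> a = b.
Proof. by move=> ha hb; apply: (mp_in ((subsetP sub) _ ha) ((subsetP sub) _ hb)). Qed.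

Lemma out0 x y : (x, y) \in Hpp -> (x, y) \notin H -> forall z, (x, z) \notin H.
Proof.
move=> he hn z; apply/negP => hz; move: hn.
by rewrite (mp_out he ((subsetP sub) _ hz)) hz.
Qed.

Lemma in0 x y : (x, y) \in Hpp -> (x, y) \notin H -> forall z, (z, y) \notin H.
Proof.
move=> he hn z; apply/negP => hz; move: hn.
by rewrite (mp_in he ((subsetP sub) _ hz)) hz.
Qed.

Lemma DL_H u v : C H u v -> D H u v || D H v u.
Proof. exact: DL sub_out sub_in u v. Qed.

Lemma noC x y : (x, y) \in Hpp -> (x, y) \notin H -> ~~ C H x y.
Proof.
move=> he hn; apply/negP => /DL_H /orP[h|h].
  have exy := D_out0 (out0 he hn) h; move: (mp_acyc he); by rewrite exy connect0.
by move: (mp_acyc he); rewrite (D_sub sub h).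
Qed.

Lemma noC_src x1 y1 x2 y2 : (x1, y1) \in Hpp -> (x1, y1) \notin H ->
  (x2, y2) \in Hpp -> (x2, y2) \notin H -> (x1, y1) != (x2, y2) -> ~~ C H x1 x2.
Proof.
move=> he hn hf hfn ne; apply/negP => /DL_H /orP[h|h].
  have ex := D_out0 (out0 he hn) h; move: ne; rewrite ex in he *.
  by rewrite (mp_out he hf) eqxx.
have ex := D_out0 (out0 hf hfn) h; move: ne; rewrite ex in hf *.
by rewrite (mp_out he hf) eqxx.
Qed.

Lemma noC_tgt x1 y1 x2 y2 : (x1, y1) \in Hpp -> (x1, y1) \notin H ->
  (x2, y2) \in Hpp -> (x2, y2) \notin H -> (x1, y1) != (x2, y2) -> ~~ C H y1 y2.
Proof.
move=> he hn hf hfn ne; apply/negP => /DL_H /orP[h|h].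
  have ex := D_in0 (in0 hf hfn) h; move: ne; rewrite ex in he *.
  by rewrite (mp_in he hf) eqxx.
have ex := D_in0 (in0 he hn) h; move: ne; rewrite ex in hf *.
by rewrite (mp_in he hf) eqxx.
Qed.

Lemma noCyc x1 y1 x2 y2 : (x1, y1) \in Hpp -> (x1, y1) \notin H ->
  (x2, y2) \in Hpp -> (x2, y2) \notin H -> ~~ (C H x1 y2 && C H y1 x2).
Proof.
move=> he hn hf hfn; apply/negP => /andP[c1 c2].
have d1 : D H y2 x1.
  case/orP: (DL_H c1) => h //; by rewrite (D_out0 (out0 he hn) h) connect0.
have d2 : D H y1 x2.
  case/orP: (DL_H c2) => h //; by rewrite (D_out0 (out0 hf hfn) h) connect0.
move: (mp_acyc hf); apply/negP/negPn.
apply: connect_trans (D_sub sub d1) _; apply: connect_trans (D_sub sub d2).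
exact: connect1.
Qed.
End MP.
End G.

Section Lin.
Variables (R : comPzRingType).

Lemma lin_comp (U V W : lmodType R) (f : U -> V) (g : V -> W) :
  linear f -> linear g -> linear (fun u => g (f u)).
Proof. by move=> hf hg a u v; rewrite hf hg. Qed.

Lemma lin0 (U V : lmodType R) (f : U -> V) : linear f -> f 0 = 0.
Proof.
move=> hf; have := hf (-1) 0 0; rewrite scaler0 addr0 => ->.
by rewrite scaleN1r addNr.
Qed.

Lemma linD (U V : lmodType R) (f : U -> V) : linear f -> forall u v, f (u + v) = f u + f v.
Proof. by move=> hf u v; have := hf 1 u v; rewrite !scale1r. Qed.

Lemma linZ (U V : lmodType R) (f : U -> V) : linear f -> forall a u, f (a *: u) = a *: f u.
Proof. by move=> hf a u; have := hf a u 0; rewrite !addr0 (lin0 hf) addr0. Qed.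

Lemma lin_sum (U V : lmodType R) (f : U -> V) (I : Type) (r : seq I) (P : pred I) (F : I -> U) :
  linear f -> f (\sum_(i <- r | P i) F i) = \sum_(i <- r | P i) f (F i).
Proof.
move=> hf; elim/big_rec2: _ => [|i y1 y2 _ <-]; first exact: lin0.
exact: linD.
Qed.

Lemma lin_id (U : lmodType R) : linear (fun u : U => u).
Proof. by []. Qed.
End Lin.

Section Tensor.
Variables (R : comPzRingType) (A : algType R) (M : lmodType R).
Variables (B : bimodule A M) (TP : tensor_power A M).

Lemma ml_comp k (W W' : lmodType R) (f : M -> ('I_k -> A) -> W) (h : W -> W') :
  linear h -> multilinear f -> multilinear (fun m a => h (f m a)).
Proof.
move=> hh [h1 h2]; split.
  by move=> a; apply: lin_comp hh.
by move=> m a i; apply: lin_comp hh.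
Qed.

Lemma tlift_spec k (W : lmodType R) (f : M -> ('I_k -> A) -> W) :
  multilinear f ->
  linear (tlift (TP:=TP) f) /\ (forall m a, tlift (TP:=TP) f (tp_i TP k m a) = f m a).
Proof.
move=> hf; rewrite /tlift.
pose P := (fun g : tp_T TP k -> W => linear g /\ (forall m a, g (tp_i TP k m a) = f m a)).
change (P (epsilon (inhabits (fun _ => 0)) P)).
apply: epsilon_spec.
case: (@tp_univ R A M TP k W f hf) => g [hg _]; by exists g.
Qed.

Lemma tp_ext k (W : lmodType R) (g1 g2 : tp_T TP k -> W) :
  linear g1 -> linear g2 -> (forall m a, g1 (tp_i TP k m a) = g2 (tp_i TP k m a)) ->
  forall z, g1 z = g2 z.
Proof.
move=> l1 l2 he z.
have hf : multilinear (fun m a => g1 (tp_i TP k m a)) by apply: ml_comp l1 (@tp_multi R A M TP k).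
case: (@tp_univ R A M TP k W _ hf) => g [_ hu].
have e1 := hu g1 (conj l1 (fun m a => erefl)).
have e2 := hu g2 (conj l2 (fun m a => esym (he m a))).
by rewrite -e1 -e2.
Qed.

Lemma tp_slot k' m (b : 'I_k' -> A) (j0 : 'I_k') (L : A -> A) : linear L ->
  linear (fun x => tp_i TP k' m (fun j => if j == j0 then L x else b j)).
Proof.
move=> hL; have h := (@tp_multi R A M TP k').2 m b j0.
exact: lin_comp hL h.
Qed.

Lemma getA_upd k (a : 'I_k -> A) (i : 'I_k) x p :
  getA (fun j => if j == i then x else a j) p = if p == i then x else getA a p.
Proof.
rewrite /getA; case: insubP => [j _ hj|hn].
  by rewrite -hj (inj_eq val_inj).
have -> : (p == i) = false by apply/negP => /eqP he; move: hn; rewrite he ltn_ord.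
done.
Qed.

Lemma getA_ord k (a : 'I_k -> A) (j : 'I_k) : getA a j = a j.
Proof. by rewrite /getA valK. Qed.

Ltac fin := try reflexivity; try (exfalso; lia); repeat f_equal; lia.

Lemma merge_ml k k' s t : k = k'.+1 -> (s <= k)%N -> (t <= k)%N -> s != t ->
  multilinear (fun m (a : 'I_k -> A) => tp_i TP k' (merge_m B s t m a) (@merge_a R A k k' s t a)).
Proof.
move=> hk hs ht hst; split.
  move=> a; apply: lin_comp (((@tp_multi R A M TP k').1) _).
  rewrite /merge_m; case: (s == 0%N); first exact: ract_linr.
  case: (t == 0%N); [exact: lact_linr | exact: lin_id].
move=> m a i.
have hi := ltn_ord i.
have ma : forall x, merge_m B s t m (fun j => if j == i then x else a j) =
  if (s == i.+1) && (t == 0%N) then lact B x m else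
  if (t == i.+1) && (s == 0%N) then ract B m x else merge_m B s t m a.
  move=> x; rewrite /merge_m !getA_upd; simp_if; fin.
case: (boolP ((s == i.+1) || (t == i.+1))) => hc; last first.
  have hj0 : ((phi s t i.+1).-1 < k')%N by rewrite /phi; simp_if; lia.
  pose j0 := Ordinal hj0.
  have -> : (fun x => tp_i TP k' (merge_m B s t m (fun j => if j == i then x else a j))
      (@merge_a R A k k' s t (fun j => if j == i then x else a j))) =
     (fun x => tp_i TP k' (merge_m B s t m a) (fun j => if j == j0 then x else @merge_a R A k k' s t a j)).
    apply: functional_extensionality => x; rewrite ma.
    have -> : (s == i.+1) && (t == 0%N) = false by lia.
    have -> : (t == i.+1) && (s == 0%N) = false by lia.
    congr (tp_i _ _ _ _); apply: functional_extensionality => j.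
    rewrite /merge_a !getA_upd -val_eqE /= /phi; have := ltn_ord j; simp_if; fin.
  by apply: tp_slot; apply: lin_id.
have hsame : (s == 0%N) || (t == 0%N) ->
  forall x, @merge_a R A k k' s t (fun j => if j == i then x else a j) = @merge_a R A k k' s t a.
  move=> h0 x; apply: functional_extensionality => j.
  rewrite /merge_a !getA_upd; have := ltn_ord j; simp_if; fin.
case: (boolP ((s == 0%N) || (t == 0%N))) => h0.
  case/orP: hc => hc.
    have -> : (fun x => tp_i TP k' (merge_m B s t m (fun j => if j == i then x else a j))
      (@merge_a R A k k' s t (fun j => if j == i then x else a j))) =
      (fun x => tp_i TP k' (lact B x m) (@merge_a R A k k' s t a)).
      apply: functional_extensionality => x; rewrite ma hsame //.
      by have -> : (s == i.+1) && (t == 0%N) = true by lia.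
    apply: lin_comp (((@tp_multi R A M TP k').1) _); exact: lact_linl.
  have -> : (fun x => tp_i TP k' (merge_m B s t m (fun j => if j == i then x else a j))
    (@merge_a R A k k' s t (fun j => if j == i then x else a j))) =
    (fun x => tp_i TP k' (ract B m x) (@merge_a R A k k' s t a)).
    apply: functional_extensionality => x; rewrite ma hsame //.
    have -> : (s == i.+1) && (t == 0%N) = false by lia.
    by have -> : (t == i.+1) && (s == 0%N) = true by lia.
  apply: lin_comp (((@tp_multi R A M TP k').1) _); exact: ract_linl.
have hj0 : ((minn s t).-1 < k')%N by lia.
pose j0 := Ordinal hj0.
case/orP: hc => hc.
  have -> : (fun x => tp_i TP k' (merge_m B s t m (fun j => if j == i then x else a j))
      (@merge_a R A k k' s t (fun j => if j == i then x else a j))) =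
     (fun x => tp_i TP k' (merge_m B s t m a)
        (fun j => if j == j0 then x * getA a t.-1 else @merge_a R A k k' s t a j)).
    apply: functional_extensionality => x; rewrite ma.
    have -> : (s == i.+1) && (t == 0%N) = false by lia.
    have -> : (t == i.+1) && (s == 0%N) = false by lia.
    congr (tp_i _ _ _ _); apply: functional_extensionality => j.
    rewrite /merge_a !getA_upd -val_eqE /=; have := ltn_ord j; simp_if; fin.
  apply: tp_slot => c u v; by rewrite mulrDl scalerAl.
have -> : (fun x => tp_i TP k' (merge_m B s t m (fun j => if j == i then x else a j))
    (@merge_a R A k k' s t (fun j => if j == i then x else a j))) =
   (fun x => tp_i TP k' (merge_m B s t m a)
      (fun j => if j == j0 then getA a s.-1 * x else @merge_a R A k k' s t a j)).
  apply: functional_extensionality => x; rewrite ma.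
  have -> : (s == i.+1) && (t == 0%N) = false by lia.
  have -> : (t == i.+1) && (s == 0%N) = false by lia.
  congr (tp_i _ _ _ _); apply: functional_extensionality => j.
  rewrite /merge_a !getA_upd -val_eqE /=; have := ltn_ord j; simp_if; fin.
apply: tp_slot => c u v; by rewrite mulrDr scalerAr.
Qed.
End Tensor.

Lemma phi_eq s t c d : s != t ->
  (phi s t c == phi s t d) = (c == d) || (((c == s) || (c == t)) && ((d == s) || (d == t))).
Proof. move=> h; rewrite /phi /minn /maxn; simp_if; lia. Qed.

Lemma phi0 s t c : s != t ->
  (phi s t c == 0%N) = (c == 0%N) || (((c == s) || (c == t)) && ((s == 0%N) || (t == 0%N))).
Proof. move=> h; rewrite /phi /minn /maxn; simp_if; lia. Qed.

Section Alg.
Variables (R : comPzRingType) (A : algType R) (M : lmodType R) (B : bimodule A M).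

Definition mP (s t : nat) (g : nat -> A) : nat -> A :=
  fun q => if q == minn s t then g s * g t else g (if (q < maxn s t)%N then q else q.+1).
Definition mM (s t : nat) (m : M) (g : nat -> A) : M :=
  if s == 0%N then ract B m (g t) else if t == 0%N then lact B (g s) m else m.
Definition X (s t : nat) (g : nat -> A) (c : nat) : A :=
  if (c == s) || (c == t) then g s * g t else g c.

Lemma mP_phi s t g c : s != t -> mP s t g (phi s t c) = X s t g c.
Proof.
move=> h; rewrite /mP /phi /X /minn /maxn.
simp_if; try reflexivity; try (congr (g _); lia); try (exfalso; lia).
Qed.

Lemma Y_eq s t s2 t2 g c :
  s != t -> s2 != t2 -> s != s2 -> t != t2 -> ~~ ((s == t2) && (t == s2)) ->
  (if (c == s2) || (((c == s) || (c == t)) && ((s2 == s) || (s2 == t)))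
     || ((c == t2) || (((c == s) || (c == t)) && ((t2 == s) || (t2 == t))))
   then X s t g s2 * X s t g t2 else X s t g c) =
  (if (c == s) || (((c == s2) || (c == t2)) && ((s == s2) || (s == t2)))
     || ((c == t) || (((c == s2) || (c == t2)) && ((t == s2) || (t == t2))))
   then X s2 t2 g s * X s2 t2 g t else X s2 t2 g c).
Proof.
move=> h1 h2 h3 h4 h5; rewrite /X.
Time simp_if; rewrite ?mulrA; repeat f_equal; lia.
Qed.

Lemma M_eq s t s2 t2 m g :
  s != t -> s2 != t2 -> s != s2 -> t != t2 -> ~~ ((s == t2) && (t == s2)) ->
  mM (phi s t s2) (phi s t t2) (mM s t m g) (mP s t g) =
  mM (phi s2 t2 s) (phi s2 t2 t) (mM s2 t2 m g) (mP s2 t2 g).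
Proof.
move=> h1 h2 h3 h4 h5.
rewrite /mM !phi0 // !mP_phi // /X.
simp_if; rewrite ?ractM ?lactM ?lract; try reflexivity; repeat f_equal; lia.
Qed.

Lemma mP_ext s t g g' q : (forall p, (0 < p)%N -> g p = g' p) -> s != t -> (0 < q)%N ->
  mP s t g q = mP s t g' q.
Proof.
move=> hg hst hq; rewrite /mP; case: ifP => /eqP h.
  rewrite !hg //; lia.
by rewrite hg //; case: ifP; lia.
Qed.

Lemma mM_ext s t m g g' : (forall p, (0 < p)%N -> g p = g' p) -> s != t ->
  mM s t m g = mM s t m g'.
Proof.
move=> hg hst; rewrite /mM; case: eqP => h0; first by rewrite hg //; lia.
case: eqP => h1 //; rewrite hg //; lia.
Qed.

Lemma A_eq s t s2 t2 g c :
  s != t -> s2 != t2 -> s != s2 -> t != t2 -> ~~ ((s == t2) && (t == s2)) ->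
  mP (phi s t s2) (phi s t t2) (mP s t g) (phi (phi s t s2) (phi s t t2) (phi s t c)) =
  mP (phi s2 t2 s) (phi s2 t2 t) (mP s2 t2 g) (phi (phi s2 t2 s) (phi s2 t2 t) (phi s2 t2 c)).
Proof.
move=> h1 h2 h3 h4 h5.
have n1 : phi s t s2 != phi s t t2 by rewrite phi_eq //; lia.
have n2 : phi s2 t2 s != phi s2 t2 t by rewrite phi_eq //; lia.
rewrite !mP_phi // /X !phi_eq // !mP_phi //.
exact: Y_eq.
Qed.

Lemma getA_out k (a : 'I_k -> A) p : (k <= p)%N -> getA a p = 0.
Proof. by move=> h; rewrite /getA; case: insubP => // j hj; rewrite ltnNge h in hj. Qed.

Lemma getA_merge k k' s t (a : 'I_k -> A) j : k = k'.+1 -> (s <= k)%N -> (t <= k)%N -> s != t ->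
  getA (@merge_a R A k k' s t a) j = mP s t (fun p => getA a p.-1) j.+1.
Proof.
move=> hk hs ht hst; rewrite {1}/getA; case: insubP => [j' hj' ej|hn].
  by rewrite /merge_a /mP ej.
rewrite /mP; have -> : (j.+1 == minn s t) = false by lia.
rewrite getA_out //; case: ifP; lia.
Qed.
End Alg.

Lemma sign_par s t s2 t2 :
  s != t -> s2 != t2 -> s != s2 -> t != t2 -> ~~ ((s == t2) && (t == s2)) ->
  odd ((if s < t then t.+1 else s) + (if phi s t s2 < phi s t t2 then (phi s t t2).+1 else phi s t s2))%N =
  ~~ odd ((if s2 < t2 then t2.+1 else s2) + (if phi s2 t2 s < phi s2 t2 t then (phi s2 t2 t).+1 else phi s2 t2 s))%N.
Proof.
move=> h1 h2 h3 h4 h5.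
rewrite /phi /minn /maxn.
Time simp_if; lia.
Qed.



Lemma sum_anti (T : finType) (V : zmodType) (S : {set T}) (F : T -> T -> V) :
  (forall i j, i \in S -> j \in S -> i != j -> F i j = - F j i) ->
  \sum_(i in S) \sum_(j in S :\ i) F i j = 0.
Proof.
move=> hF.
pose G i j := if [&& i \in S, j \in S & i != j] then F i j else 0.
have -> : \sum_(i in S) \sum_(j in S :\ i) F i j = \sum_i \sum_j G i j.
  rewrite big_mkcond /=; apply: eq_bigr => i _; case: ifP => hi.
    rewrite big_mkcond; apply: eq_bigr => j _; rewrite /G !inE hi eq_sym /=.
    by case: (i != j); case: (j \in S).
  by rewrite big1 // => j _; rewrite /G hi.
have hG i j : G i j = - G j i.
  rewrite /G; case: (boolP [&& i \in S, j \in S & i != j]) => [/and3P[hi hj hij]|h].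
    by rewrite hj hi eq_sym hij /=; apply: hF.
  have -> : [&& j \in S, i \in S & j != i] = false.
    by apply/negbTE; move: h; apply: contra => /and3P[h1 h2 h3]; rewrite h1 h2 eq_sym h3.
  by rewrite oppr0.
pose r := @enum_rank T.
have hsplit i j : G i j = (if (r i < r j)%N then G i j else 0) + (if (r j < r i)%N then G i j else 0).
  case: (eqVneq i j) => [->|nij]; first by rewrite /G eqxx !andbF ltnn addr0.
  have : (r i : nat) != r j by rewrite (inj_eq val_inj) (inj_eq (@enum_rank_inj T)).
  by case: ltngtP => //; rewrite ?addr0 ?add0r.
under eq_bigr => i _ do under eq_bigr => j _ do rewrite hsplit.
under eq_bigr => i _ do rewrite big_split /=.
rewrite big_split /= [X in _ + X]exchange_big /=.
rewrite -big_split /=; apply: big1 => i _.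
rewrite -big_split /=; apply: big1 => j _.
by case: ifP => _; [rewrite (hG j i) addrN | rewrite addr0].
Qed.

Section Main.
Variables (R : comPzRingType) (A : algType R) (M : lmodType R).
Variables (B : bimodule A M) (TP : tensor_power A M).
Variable N : nat.
Local Notation V := 'I_N.
Local Notation edge := (V * V)%type.

Lemma Fmap_spec (H H' : {set edge}) (e : edge) :
  kdeg H = (kdeg H').+1 -> (cidx H e.1 <= kdeg H)%N -> (cidx H e.2 <= kdeg H)%N ->
  cidx H e.1 != cidx H e.2 ->
  linear (@Fmap R A M N B TP H H' e) /\
  (forall m a, @Fmap R A M N B TP H H' e (tp_i TP _ m a) =
     tp_i TP _ (merge_m B (cidx H e.1) (cidx H e.2) m a)
              (@merge_a R A _ _ (cidx H e.1) (cidx H e.2) a)).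
Proof. move=> *; rewrite /Fmap; apply: tlift_spec; exact: merge_ml. Qed.

Lemma cidx_le (H : {set edge}) v : (cidx H v <= kdeg H)%N.
Proof. have := cidx_ncomp H v; rewrite /kdeg; lia. Qed.

Lemma kdeg_lt (H : {set edge}) (v : V) (j : 'I_(kdeg H)) : (j.+1 < ncomp H)%N.
Proof. have := ltn_ord j; have := ncomp_pos H v; rewrite /kdeg; lia. Qed.

Lemma kdegS (H0 : {set edge}) (x y : V) : ~~ connect (urel H0) x y ->
  kdeg H0 = (kdeg ((x, y) |: H0)).+1.
Proof.
move=> h; rewrite /kdeg (S5 h); have := ncomp_pos ((x, y) |: H0) x; lia.
Qed.

Lemma sign_flip (n1 n2 : nat) : odd n1 = ~~ odd n2 -> (-1) ^+ n1 = - ((-1) ^+ n2 : R).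
Proof.
move=> h; rewrite -(signr_odd _ n1) -(signr_odd _ n2) h.
by case: (odd n2); rewrite /= ?expr0 ?expr1 ?opprK.
Qed.

Lemma merge_mE k s t m (a : 'I_k -> A) : merge_m B s t m a = mM B s t m (fun p => getA a p.-1).
Proof. by []. Qed.

Lemma square (E H : {set edge}) (mpH : multipath E H) (x1 y1 x2 y2 : V)
  (he : (x1, y1) \in H) (hf : (x2, y2) \in H) (hne : (x1, y1) != (x2, y2))
  (z : tp_T TP (kdeg (H :\ (x2, y2) :\ (x1, y1)))) :
  esign R (cidx (H :\ (x2, y2)) x2) (cidx (H :\ (x2, y2)) y2) *:
    @Fmap R A M N B TP (H :\ (x2, y2)) H (x2, y2)
      (esign R (cidx (H :\ (x2, y2) :\ (x1, y1)) x1) (cidx (H :\ (x2, y2) :\ (x1, y1)) y1) *: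
         @Fmap R A M N B TP (H :\ (x2, y2) :\ (x1, y1)) (H :\ (x2, y2)) (x1, y1) z)
  = - (esign R (cidx (H :\ (x1, y1)) x1) (cidx (H :\ (x1, y1)) y1) *:
    @Fmap R A M N B TP (H :\ (x1, y1)) H (x1, y1)
      (esign R (cidx (H :\ (x2, y2) :\ (x1, y1)) x2) (cidx (H :\ (x2, y2) :\ (x1, y1)) y2) *:
         @Fmap R A M N B TP (H :\ (x2, y2) :\ (x1, y1)) (H :\ (x1, y1)) (x2, y2) z)).
Proof.
set H0 := H :\ (x2, y2) :\ (x1, y1).
have sub0 : H0 \subset H by apply/subsetP => w; rewrite !inE => /and3P[].
have sub1 : H :\ (x2, y2) \subset H by apply/subsetP => w; rewrite !inE => /andP[].
have sub2 : H :\ (x1, y1) \subset H by apply/subsetP => w; rewrite !inE => /andP[].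
have e0 : (x1, y1) \notin H0 by rewrite !inE eqxx.
have f0 : (x2, y2) \notin H0 by rewrite !inE eqxx andbF.
have f1 : (x2, y2) \notin H :\ (x2, y2) by rewrite !inE eqxx.
have e2 : (x1, y1) \notin H :\ (x1, y1) by rewrite !inE eqxx.
have hH1 : H :\ (x2, y2) = (x1, y1) |: H0 by rewrite /H0 setD1K // !inE hne he.
have hc : H :\ (x1, y1) :\ (x2, y2) = H0 by rewrite /H0 !setDDl setUC.
have hH2 : H :\ (x1, y1) = (x2, y2) |: H0 by rewrite -hc setD1K // !inE eq_sym hne hf.
have hHf : H = (x2, y2) |: (H :\ (x2, y2)) by rewrite setD1K.
have hHe : H = (x1, y1) |: (H :\ (x1, y1)) by rewrite setD1K.
have nc_e0 := noC mpH sub0 he e0.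
have nc_f0 := noC mpH sub0 hf f0.
have nc_f1 := noC mpH sub1 hf f1.
have nc_e2 := noC mpH sub2 he e2.
have hst : cidx H0 x1 != cidx H0 y1 by rewrite cidx_eq.
have hst2 : cidx H0 x2 != cidx H0 y2 by rewrite cidx_eq.
have hss2 : cidx H0 x1 != cidx H0 x2.
  by rewrite cidx_eq; apply: (noC_src mpH sub0 he e0 hf f0); exact hne.
have htt2 : cidx H0 y1 != cidx H0 y2.
  by rewrite cidx_eq; apply: (noC_tgt mpH sub0 he e0 hf f0); exact hne.
have hcyc : ~~ ((cidx H0 x1 == cidx H0 y2) && (cidx H0 y1 == cidx H0 x2)).
  by rewrite !cidx_eq; exact (noCyc mpH sub0 he e0 hf f0).
have cH1 v : cidx (H :\ (x2, y2)) v = phi (cidx H0 x1) (cidx H0 y1) (cidx H0 v).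
  by rewrite hH1 (S4 nc_e0).
have cH2 v : cidx (H :\ (x1, y1)) v = phi (cidx H0 x2) (cidx H0 y2) (cidx H0 v).
  by rewrite hH2 (S4 nc_f0).
have cHa v : cidx H v = phi (cidx (H :\ (x2, y2)) x2) (cidx (H :\ (x2, y2)) y2) (cidx (H :\ (x2, y2)) v).
  by rewrite {1}hHf (S4 nc_f1).
have cHb v : cidx H v = phi (cidx (H :\ (x1, y1)) x1) (cidx (H :\ (x1, y1)) y1) (cidx (H :\ (x1, y1)) v).
  by rewrite {1}hHe (S4 nc_e2).
have k01 : kdeg H0 = (kdeg (H :\ (x2, y2))).+1 by rewrite hH1; exact: kdegS.
have k02 : kdeg H0 = (kdeg (H :\ (x1, y1))).+1 by rewrite hH2; exact: kdegS.
have k1 : kdeg (H :\ (x2, y2)) = (kdeg H).+1 by rewrite {2}hHf; exact: kdegS.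
have k2 : kdeg (H :\ (x1, y1)) = (kdeg H).+1 by rewrite {2}hHe; exact: kdegS.
have hab : cidx (H :\ (x2, y2)) x2 != cidx (H :\ (x2, y2)) y2 by rewrite cidx_eq.
have hcd : cidx (H :\ (x1, y1)) x1 != cidx (H :\ (x1, y1)) y1 by rewrite cidx_eq.
have [lin_e0 pe0] := Fmap_spec (H' := H :\ (x2, y2)) (e := (x1, y1)) k01 (cidx_le _ _) (cidx_le _ _) hst.
have [lin_f0 pf0] := Fmap_spec (H' := H :\ (x1, y1)) (e := (x2, y2)) k02 (cidx_le _ _) (cidx_le _ _) hst2.
have [lin_f1 pf1] := Fmap_spec (H' := H) (e := (x2, y2)) k1 (cidx_le _ _) (cidx_le _ _) hab.
have [lin_e2 pe2] := Fmap_spec (H' := H) (e := (x1, y1)) k2 (cidx_le _ _) (cidx_le _ _) hcd.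
rewrite (linZ lin_f1) (linZ lin_e2) !scalerA.
have hsign : esign R (cidx (H :\ (x2, y2)) x2) (cidx (H :\ (x2, y2)) y2) *
    esign R (cidx H0 x1) (cidx H0 y1) =
  - (esign R (cidx (H :\ (x1, y1)) x1) (cidx (H :\ (x1, y1)) y1) *
    esign R (cidx H0 x2) (cidx H0 y2)).
  rewrite !cH1 !cH2 /esign -!exprD; apply: sign_flip.
  rewrite addnC [X in _ = ~~ odd X]addnC; exact: sign_par.
rewrite hsign scaleNr; congr (- (_ *: _)).
apply: (tp_ext (lin_comp lin_e0 lin_f1) (lin_comp lin_f0 lin_e2)) => m a.
rewrite pe0 pf1 pf0 pe2.
congr (tp_i _ _ _ _).
  rewrite !merge_mE.
  rewrite (mM_ext (g' := mP (cidx H0 x1) (cidx H0 y1) (fun p => getA a p.-1)) B _ _ hab); last first.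
    move=> p hp; rewrite (getA_merge _ _ k01 (cidx_le _ _) (cidx_le _ _) hst) prednK //.
  rewrite (mM_ext (g' := mP (cidx H0 x2) (cidx H0 y2) (fun p => getA a p.-1)) B _ _ hcd); last first.
    move=> p hp; rewrite (getA_merge _ _ k02 (cidx_le _ _) (cidx_le _ _) hst2) prednK //.
  rewrite !cH1 !cH2; exact: M_eq.
apply: functional_extensionality => j.
rewrite -[LHS]getA_ord -[RHS]getA_ord.
rewrite (getA_merge _ _ k1 (cidx_le _ _) (cidx_le _ _) hab).
rewrite (getA_merge _ _ k2 (cidx_le _ _) (cidx_le _ _) hcd).
rewrite (mP_ext (g' := mP (cidx H0 x1) (cidx H0 y1) (fun p => getA a p.-1)) _ hab); last first.
- by [].
- move=> p hp; rewrite (getA_merge _ _ k01 (cidx_le _ _) (cidx_le _ _) hst) prednK //.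
rewrite (mP_ext (g' := mP (cidx H0 x2) (cidx H0 y2) (fun p => getA a p.-1)) _ hcd); last first.
- by [].
- move=> p hp; rewrite (getA_merge _ _ k02 (cidx_le _ _) (cidx_le _ _) hst2) prednK //.
have [v hv] : exists v, cidx H v = j.+1.
  by apply: cidx_surj; exact: (kdeg_lt x1 j).
rewrite -hv [in LHS]cHa [in RHS]cHb !cH1 !cH2; exact: A_eq.
Qed.

Lemma mp_sub (E H H' : {set edge}) : multipath E H -> H' \subset H -> multipath E H'.
Proof.
move=> mpH hs; have mpH' := mpH; case/and4P: mpH' => hE hout hin hac.
apply/and4P; split.
- exact: subset_trans hs hE.
- apply/forallP => v; apply: leq_trans (forallP hout v); apply: subset_leq_card.
  by apply/subsetP => u; rewrite !inE => h; apply: (subsetP hs).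
- apply/forallP => v; apply: leq_trans (forallP hin v); apply: subset_leq_card.
  by apply/subsetP => u; rewrite !inE => h; apply: (subsetP hs).
- apply/forallP => u; apply/forallP => v; apply/implyP => huv.
  apply/negP => hd; move: (mp_acyc mpH ((subsetP hs) _ huv)); by rewrite (D_sub hs hd).
Qed.

Lemma Fmap_lin1 (E H : {set edge}) (f : edge) : multipath E H -> f \in H ->
  linear (@Fmap R A M N B TP (H :\ f) H f).
Proof.
case: f => x2 y2 mpH hf.
have sub1 : H :\ (x2, y2) \subset H by apply/subsetP => w; rewrite !inE => /andP[].
have f1 : (x2, y2) \notin H :\ (x2, y2) by rewrite !inE eqxx.
have nc := noC mpH sub1 hf f1.
have hHf : H = (x2, y2) |: (H :\ (x2, y2)) by rewrite setD1K.
have k1 : kdeg (H :\ (x2, y2)) = (kdeg H).+1 by rewrite {2}hHf; exact: kdegS.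
have hab : cidx (H :\ (x2, y2)) x2 != cidx (H :\ (x2, y2)) y2 by rewrite cidx_eq.
exact: (Fmap_spec (e := (x2, y2)) k1 (cidx_le _ _) (cidx_le _ _) hab).1.
Qed.
End Main.

Theorem theorem4p10 (N : nat) (E : {set 'I_N * 'I_N}) (HG : is_digraph E)
    (R : comPzRingType) (A : algType R) (M : lmodType R)
    (B : bimodule A M) (TP : tensor_power A M)
    (n : nat) (x : cochain N TP) (H : {set 'I_N * 'I_N}) :
  dmu E B TP n.+1 (dmu E B TP n x) H = 0.
Proof.
rewrite {1}/dmu; case: ifP => [/andP[mpH /eqP cardH]|_] //.
have inner : forall f, f \in H -> dmu E B TP n x (H :\ f) =
   \sum_(e in H :\ f) esign R (cidx (H :\ f :\ e) e.1) (cidx (H :\ f :\ e) e.2) *: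
     @Fmap R A M N B TP (H :\ f :\ e) (H :\ f) e (x (H :\ f :\ e)).
  move=> f hf; rewrite /dmu.
  have -> : multipath E (H :\ f) && (#|H :\ f| == n.+1) = true.
    apply/andP; split.
      by apply: (mp_sub mpH); apply/subsetP => w; rewrite !inE => /andP[].
    by move: cardH; rewrite (cardsD1 f) hf add1n => [[->]].
  by [].
under eq_bigr => f hf do rewrite inner // (lin_sum _ _ _ (Fmap_lin1 B (TP:=TP) mpH hf)) scaler_sumr.
apply: sum_anti => f e hf he hfe.
case: f hf hfe => x2 y2 hf hfe; case: e he hfe => x1 y1 he hfe /=.
rewrite (_ : H :\ (x1, y1) :\ (x2, y2) = H :\ (x2, y2) :\ (x1, y1)); last by rewrite !setDDl setUC.
apply: (square B (TP:=TP) mpH he hf _ (x _)).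
by rewrite eq_sym.
Qed.
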